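(* Let $d\ge 2$, $s=d-1$, $\eta=\mathrm{diag}(-1,1,\dots,1)$, and let $E=\begin{pmatrix}e_0 & e_1^{\mathsf T}\\ e_2 & e_3\end{pmatrix}$ be a real invertible $d\times d$ matrix (a vielbein), where $e_0\in\mathbb R$, $e_1,e_2\in\mathbb R^{s}$, and $e_3$ is an invertible real $s\times s$ matrix. Let $g=E^{\mathsf T}\eta E$. Then the following are equivalent: (i) there exists a Lorentz transformation $\Lambda$ (i.e. $\Lambda^{\mathsf T}\eta\Lambda=\eta$) of the form $\Lambda=\begin{pmatrix}\lambda & p^{\mathsf T}\\ p & (I+pp^{\mathsf T})^{1/2}\end{pmatrix}\begin{pmatrix}1&0\\0&R\end{pmatrix}$ with $p\in\mathbb R^s$, $\lambda=(1+p^{\mathsf T}p)^{1/2}$, $R\in O(s)$, such that $\Lambda E$ is block lower triangular, i.e. $\Lambda E=\begin{pmatrix}N & 0\\ eN^{\vec{}} & e\end{pmatrix}$ for some $N\in\mathbb R$, $\vec N\in\mathbb R^s$ and $s\times s$ matrix $e$; (ii) $1-e_1^{\mathsf T}(e_3^{\mathsf T}e_3)^{-1}e_1>0$; (iii) $g^{00}<0$, i.e. the apparent lapse $N=(-g^{00})^{-1/2}$ of $g$ in the given coordinates is real, where $N^2=(e_0-e_1^{\mathsf T}e_3^{-1}e_2)^2\big(1-e_1^{\mathsf T}(e_3^{\mathsf T}e_3)^{-1}e_1\big)^{-1}$.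
   Context: Here $g^{00}$ denotes the $(0,0)$ entry of $g^{-1}$, and indices $0,1,\dots,s$ label rows/columns with $0$ the time direction. ''Block lower triangular'' means the $1\times s$ upper-right block of $\Lambda E$ vanishes. *)

(* Defs.v *)
(* real-closed field R (generalizes the reals; statement is algebraic). *)
From HB Require Import structures.
From mathcomp Require Import all_boot all_order all_algebra.
Set Implicit Arguments. Unset Strict Implicit. Unset Printing Implicit Defensive.
Import Order.TTheory GRing.Theory Num.Theory.
Local Open Scope ring_scope.

Definition minkowski (R : rcfType) (s : nat) : 'M[R]_(1 + s) :=
  block_mx (-1)%:M 0 0 1%:M.
Arguments minkowski R s : clear implicits.

Definition vielbein (R : rcfType) (s : nat) (e0 : R) (e1 e2 : 'cV[R]_s)
  (e3 : 'M[R]_s) : 'M[R]_(1 + s) :=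
  block_mx e0%:M e1^T e2 e3.

Definition is_psd_sqrt (R : rcfType) (n : nat) (A S : 'M[R]_n) : Prop :=
  [/\ S^T = S, (forall v : 'rV[R]_n, 0 <= (v *m S *m v^T) ord0 ord0)
    & S *m S = A].

Definition orthogonal_mx (R : rcfType) (n : nat) (Q : 'M[R]_n) : Prop :=
  Q^T *m Q = 1%:M.

Definition lorentz (R : rcfType) (s : nat) (L : 'M[R]_(1 + s)) : Prop :=
  L^T *m minkowski R s *m L = minkowski R s.

Definition boost_rot (R : rcfType) (s : nat) (p : 'cV[R]_s) (S Q : 'M[R]_s)
  : 'M[R]_(1 + s) :=
  block_mx (Num.sqrt (1 + (p^T *m p) ord0 ord0))%:M p^T p S
  *m block_mx 1%:M 0 0 Q.

(* Main.v *)
Require Import Defs.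
From HB Require Import structures.
From mathcomp Require Import all_boot all_order all_algebra.
From mathcomp Require Import ring lra.
Import Order.TTheory GRing.Theory Num.Theory.
Local Open Scope ring_scope.

Section L.
Variables (R : rcfType) (s : nat).

Lemma eta2 : minkowski R s *m minkowski R s = 1%:M.
Proof.
rewrite /minkowski mulmx_block !mulmx0 !mul0mx !addr0 !add0r mulmx1.
by rewrite -scalar_mxM mulrNN mulr1 -scalar_mx_block.
Qed.

Lemma trZ m n (a : R) (A : 'M[R]_(m, n)) : (a *: A)^T = a *: A^T.
Proof. by apply/matrixP => i j; rewrite !mxE. Qed.

Lemma trN m n (A : 'M[R]_(m, n)) : (- A)^T = - A^T.
Proof. by apply/matrixP => i j; rewrite !mxE. Qed.

Lemma sqnorm_ge0 n (x : 'rV[R]_n) : 0 <= (x *m x^T) ord0 ord0.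
Proof.
rewrite mxE; apply: sumr_ge0 => i _; rewrite mxE; by rewrite -expr2 sqr_ge0.
Qed.

Lemma invmxM' n (A B : 'M[R]_n) : A \in unitmx -> B \in unitmx ->
  invmx (A *m B) = invmx B *m invmx A.
Proof.
move=> hA hB.
have h1 : (A *m B) *m (invmx B *m invmx A) = 1%:M.
  by rewrite -mulmxA (mulmxA B) mulmxV // mul1mx mulmxV.
have [u _] := mulmx1_unit h1.
by rewrite -[RHS](mulKmx u) h1 mulmx1.
Qed.

Lemma c_eq (e1 : 'cV[R]_s) (e3 : 'M[R]_s) : e3 \in unitmx ->
  e1^T *m invmx (e3^T *m e3) *m e1 =
  (e1^T *m invmx e3) *m (e1^T *m invmx e3)^T.
Proof.
move=> he3; rewrite invmxM' ?unitmx_tr // trmx_mul trmx_inv trmxK !mulmxA //.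
Qed.

Lemma g00_eq (e0 : R) (e1 e2 : 'cV[R]_s) (e3 : 'M[R]_s)
  (hE : vielbein e0 e1 e2 e3 \in unitmx) (he3 : e3 \in unitmx) :
  let E := vielbein e0 e1 e2 e3 in
  let g := E^T *m minkowski R s *m E in
  let D := 1 - (e1^T *m invmx (e3^T *m e3) *m e1) ord0 ord0 in
  let sigma := e0 - (e1^T *m invmx e3 *m e2) ord0 ord0 in
  exists a : R, a * sigma = 1 /\
    ulsubmx (invmx g) ord0 ord0 = - (a ^+ 2 * D).
Proof.
move=> E g D sigma.
set X := invmx E.
have hg : invmx g = X *m minkowski R s *m X^T.
  have h1 : g *m (X *m minkowski R s *m X^T) = 1%:M.
    rewrite /g -!mulmxA (mulmxA E) mulmxV // mul1mx (mulmxA (minkowski R s)).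
    by rewrite eta2 mul1mx -trmx_mul mulVmx // trmx1.
  have [gu _] := mulmx1_unit h1.
  by rewrite -[RHS](mulKmx gu) h1 mulmx1.
rewrite hg.
have hXE : X *m E = 1%:M by rewrite mulVmx.
move: hXE; rewrite -[X]submxK /E /vielbein mulmx_block (scalar_mx_block 1 s).
case/eq_block_mx => h1 h2 _ _.
set Xa := ulsubmx X in h1 h2 *; set Xb := ursubmx X in h1 h2 *.
set w := e1^T *m invmx e3.
have hXb : Xb = - (Xa *m w).
  apply/eqP; rewrite -subr_eq0 opprK; apply/eqP.
  rewrite -(mulmxK he3 (Xb + Xa *m w)) mulmxDl /w -(mulmxA Xa) -(mulmxA e1^T).
  by rewrite mulVmx // mulmx1 addrC h2 mul0mx.
rewrite (mx11_scalar Xa) in hXb h1 *.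
set a := Xa ord0 ord0 in hXb h1 *.
exists a; split.
  rewrite hXb !mul_scalar_mx mulNmx -scalemxAl (mx11_scalar (w *m e2)) !scale_scalar_mx -raddfN -raddfD /= in h1.
  move/(congr1 (fun M : 'M_1 => M ord0 ord0)): h1; rewrite /sigma -/w; set q := (w *m e2) ord0 ord0.
  rewrite !mxE /= !mulr1n => <-; ring.
rewrite -[X]submxK /minkowski tr_block_mx !mulmx_block block_mxKul.
rewrite !mulmx0 ?mul0mx !addr0 mulmx1 hXb.
rewrite /D c_eq // -/w.
set c := (w *m w^T) ord0 ord0.
rewrite tr_scalar_mx !mul_scalar_mx add0r raddfN /= linearZ /=.
rewrite !scalerN !mulNmx linearN /= !mulmxN opprK trZ -scalemxAl -scalemxAr mul_mx_scalar.
rewrite -scalemxAl (mx11_scalar (w *m w^T)) -/c !scale_scalar_mx -raddfN -raddfD /=.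
rewrite !mxE /= !mulr1n; ring.
Qed.

Lemma fwd (e0 : R) (e1 e2 : 'cV[R]_s) (e3 : 'M[R]_s) (he3 : e3 \in unitmx)
  (p : 'cV[R]_s) (S Q : 'M[R]_s) :
  orthogonal_mx Q -> ursubmx (boost_rot p S Q *m vielbein e0 e1 e2 e3) = 0 ->
  0 < 1 - (e1^T *m invmx (e3^T *m e3) *m e1) ord0 ord0.
Proof.
rewrite /orthogonal_mx => hQ.
rewrite /boost_rot /vielbein !mulmx_block block_mxKur.
rewrite !mulmx0 !mulmx1 !addr0 !add0r.
set l := Num.sqrt _ => h.
set w := e1^T *m invmx e3.
have hpQ : p^T *m Q = - (l *: w).
  apply/eqP; rewrite -subr_eq0 opprK; apply/eqP.
  move/(congr1 (fun M => M *m invmx e3)): h.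
  rewrite mul0mx mulmxDl mulmxK // mul_scalar_mx -scalemxAl -/w addrC => <-.
  done.
have hpp : p^T *m p = (l ^+ 2) *: (w *m w^T).
  have -> : p^T *m p = p^T *m Q *m (p^T *m Q)^T by rewrite trmx_mul trmxK mulmxA -(mulmxA p^T) (mulmx1C hQ) mulmx1.
  rewrite hpQ raddfN /= mulNmx mulmxN opprK trZ.
  by rewrite -scalemxAl -scalemxAr scalerA expr2.
have t0 : 0 <= (p^T *m p) ord0 ord0.
  by have := @sqnorm_ge0 _ (p^T); rewrite trmxK.
have hl : l ^+ 2 = 1 + (p^T *m p) ord0 ord0 by rewrite sqr_sqrtr // addr_ge0.
rewrite c_eq // -/w.
move: hl; rewrite hpp mxE.
set c := (w *m w^T) ord0 ord0 => hl.
nra.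
Qed.

Lemma bwd (e0 : R) (e1 e2 : 'cV[R]_s) (e3 : 'M[R]_s) (he3 : e3 \in unitmx) :
  0 < 1 - (e1^T *m invmx (e3^T *m e3) *m e1) ord0 ord0 ->
  exists (p : 'cV[R]_s) (S Q : 'M[R]_s),
      [/\ is_psd_sqrt (1%:M + p *m p^T) S, orthogonal_mx Q,
          lorentz (boost_rot p S Q)
        & ursubmx (boost_rot p S Q *m vielbein e0 e1 e2 e3) = 0].
Proof.
rewrite c_eq //; set w := e1^T *m invmx e3; set c := (w *m w^T) ord0 ord0 => hD.
set l := (Num.sqrt (1 - c))^-1.
have l0 : 0 < l by rewrite invr_gt0 sqrtr_gt0.
have hl2 : l ^+ 2 * (1 - c) = 1.
  by rewrite exprVn sqr_sqrtr ?ltW // mulVf // gt_eqF.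
set p := - (l *: w^T).
have hpp : p^T *m p = (l ^+ 2 - 1)%:M.
  rewrite /p trN trZ trmxK mulNmx mulmxN opprK -scalemxAl -scalemxAr scalerA.
  rewrite (mx11_scalar (w *m w^T)) -/c scale_scalar_mx; congr (_%:M); nra.
have ht : Num.sqrt (1 + (p^T *m p) ord0 ord0) = l.
  by rewrite hpp mxE /= mulr1n addrC subrK sqrtr_sqr gtr0_norm.
have l1 : 1 + l != 0 by rewrite gt_eqF // ltr_wpDr // ltW.
set k := (1 + l)^-1.
have k0 : 0 <= k by rewrite invr_ge0 addr_ge0 // ltW.
set S := 1%:M + k *: (p *m p^T).
have hSp : S *m p = l *: p.
  rewrite /S mulmxDl mul1mx -scalemxAl -mulmxA hpp mul_mx_scalar scalerA.
  rewrite -{1}[p]scale1r -scalerDl; congr (_ *: _); rewrite /k; field => //.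
have hST : S^T = S.
  by rewrite /S raddfD /= trmx1 trZ trmx_mul trmxK.
have hpS : p^T *m S = l *: p^T.
  by rewrite -[p^T *m S]trmxK trmx_mul hST trmxK hSp trZ.
have hSS : S *m S = 1%:M + p *m p^T.
  rewrite {1}/S mulmxDl mul1mx -scalemxAl -mulmxA hpS -scalemxAr scalerA.
  rewrite /S -addrA -scalerDl; have -> : k + k * l = 1 by rewrite /k; field.
  by rewrite scale1r.
have hB : boost_rot p S 1%:M = block_mx l%:M p^T p S.
  by rewrite /boost_rot ht -scalar_mx_block mulmx1.
exists p, S, (1%:M : 'M[R]_s); split.
- split => //.
  move=> v.
  have -> : v *m S *m v^T = v *m v^T + k *: ((v *m p) *m (v *m p)^T).
    rewrite /S mulmxDr mulmx1 mulmxDl; congr (_ + _).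
    by rewrite -scalemxAr -scalemxAl trmx_mul !mulmxA.
  have h1 := @sqnorm_ge0 _ v; have h2 := @sqnorm_ge0 _ (v *m p).
  move: h1 h2; set a1 := v *m v^T; set a2 := (v *m p) *m _ => h1 h2.
  have -> : (a1 + k *: a2) ord0 ord0 = a1 ord0 ord0 + k * a2 ord0 ord0 by rewrite !mxE.
  by rewrite addr_ge0 ?mulr_ge0.
- by rewrite /orthogonal_mx trmx1 mulmx1.
- rewrite hB /lorentz /minkowski tr_block_mx tr_scalar_mx trmxK hST !mulmx_block.
  rewrite !mulmx0 ?mul0mx ?addr0 ?add0r ?mulmx1.
  rewrite hpp hSp hpS hSS -!scalar_mxM !mul_mx_scalar !mul_scalar_mx.
  congr block_mx.
  + by rewrite -raddfD /=; congr (_%:M); ring.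
  + by rewrite -scalerDl mulrN1 addNr scale0r.
  + by rewrite scaleN1r scalerN addNr.
  + by rewrite scaleN1r mulNmx addrCA addNr addr0.
- rewrite hB /vielbein mulmx_block block_mxKur /p trN trZ trmxK mulNmx -scalemxAl.
  by rewrite /w -mulmxA mulVmx // mulmx1 mul_scalar_mx subrr.
Qed.
End L.

Theorem lemma2 (R : rcfType) (s : nat) (hs : (0 < s)%N)
  (e0 : R) (e1 e2 : 'cV[R]_s) (e3 : 'M[R]_s)
  (hE : vielbein e0 e1 e2 e3 \in unitmx) (he3 : e3 \in unitmx) :
  let E := vielbein e0 e1 e2 e3 in
  let g := E^T *m minkowski R s *m E in
  let g00 := ulsubmx (invmx g) ord0 ord0 in
  let D := 1 - (e1^T *m invmx (e3^T *m e3) *m e1) ord0 ord0 in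
  let sigma := e0 - (e1^T *m invmx e3 *m e2) ord0 ord0 in
  (* (i) <-> (ii) *)
  ((exists (p : 'cV[R]_s) (S Q : 'M[R]_s),
      [/\ is_psd_sqrt (1%:M + p *m p^T) S, orthogonal_mx Q,
          lorentz (boost_rot p S Q)
        & ursubmx (boost_rot p S Q *m E) = 0]) <-> 0 < D)
  (* (ii) <-> (iii) *)
  /\ (0 < D <-> g00 < 0)
  (* the lapse formula N^2 = (-g^00)^{-1} = sigma^2 / D *)
  /\ (g00 != 0 -> - g00^-1 = sigma ^+ 2 / D).
Proof.
move=> E g g00 D sigma.
have [a [ha hg00]] := @g00_eq R s e0 e1 e2 e3 hE he3.
rewrite -/g00 -/D in hg00; rewrite -/sigma in ha.
have a0 : a != 0 by apply: contra_eq_neq ha => ->; rewrite mul0r eq_sym oner_neq0.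
have a2 : 0 < a ^+ 2 by rewrite lt_def sqrf_eq0 a0 sqr_ge0.
split; [split; [case=> p [S [Q [_ hQ _ hz]]]; exact: (@fwd R s e0 e1 e2 e3 he3 p S Q hQ hz) | exact: (@bwd R s e0 e1 e2 e3 he3)] | split].
  by rewrite hg00 oppr_lt0 pmulr_rgt0.
rewrite hg00 => h.
have D0 : D != 0 by apply: contraNneq h => hD0; rewrite hD0 mulr0 oppr0.
have -> : sigma = a^-1 by rewrite -[sigma]mul1r -(mulVf a0) -mulrA ha mulr1.
by field; rewrite D0 a0.
Qed.
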